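(* Let $X$ be a Hausdorff topological space and $(U_i)_{i\in I}$ a family of open subsets of $X$. Say a family $(W_j)_{j\in J}$ of open subsets of $X$ has property ( * ) if for all $j,k\in J$ with $W_j\cap W_k\neq\emptyset$ there exists $i\in I$ with $W_j\cup W_k\subseteq U_i$. (a) If $X$ is regular, $M$ is a compact subset of $X$ and $(U_i)_{i\in I}$ covers $M$, then there is a cover $(W_j)_{j\in J}$ of $M$ by open subsets of $X$ with property ( * ). (b) If $X$ is paracompact and $(U_i)_{i\in I}$ covers $X$, then there is an open cover $(W_j)_{j\in J}$ of $X$ with property ( * ). (c) If $X$ is paracompact, $M$ is a closed subset of $X$ and $(U_i)_{i\in I}$ covers $M$, then there is a cover $(W_j)_{j\in J}$ of $M$ by open subsets of $X$ with property ( * ). (d) If $M$ is a locally closed subset of $X$ (i.e., each point of $M$ has a neighborhood $U$ in $X$ with $U\cap M$ relatively closed in $U$), every open neighborhood of $M$ in $X$ contains a paracompact open neighborhood of $M$ in $X$, and $(U_i)_{i\in I}$ covers $M$, then there is a cover $(W_j)_{j\in J}$ of $M$ by open subsets of $X$ with property ( * ). *)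

(* Defs.v *)
From HB Require Import structures.
From mathcomp Require Import all_boot all_order all_algebra.
From mathcomp Require Import all_classical all_reals all_analysis.
Set Implicit Arguments. Unset Strict Implicit. Unset Printing Implicit Defensive.
Local Open Scope classical_set_scope.

Definition star_property {X : topologicalType} {I J : Type}
  (U : I -> set X) (W : J -> set X) : Prop :=
  forall j k : J, W j `&` W k !=set0 -> exists i : I, W j `|` W k `<=` U i.

(* S is paracompact as a subspace of X (relative topology): every family of
   open subsets of X covering S admits a family of open subsets of X covering S
   whose traces on S refine the given one and are locally finite in S.
   (Hausdorffness of S is inherited from the ambient Hausdorff space X.) *)
Definition paracompact_subset {X : topologicalType} (S : set X) : Prop :=
  forall (I : Type) (U : I -> set X), (forall i, open (U i)) ->
    S `<=` \bigcup_i U i ->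
    exists (J : Type) (V : J -> set X),
      [/\ (forall j, open (V j)),
          S `<=` \bigcup_j V j,
          (forall j, exists i, V j `&` S `<=` U i) &
          (forall x, S x -> exists N, nbhs x N /\
              finite_set [set j | V j `&` S `&` N !=set0])].

Definition paracompact_space (X : topologicalType) : Prop :=
  paracompact_subset [set: X].

Definition locally_closed {X : topologicalType} (M : set X) : Prop :=
  forall x, M x -> exists U : set X, nbhs x U /\
    exists C : set X, closed C /\ U `&` M = U `&` C.

(* Main.v *)
Require Import Defs.
From HB Require Import structures.
From mathcomp Require Import all_boot all_order all_algebra.
From mathcomp Require Import all_classical all_reals all_analysis.
From mathcomp Require Import finmap.
Local Open Scope classical_set_scope.
Lemma fin_nbhs (X : topologicalType) (J : Type) (F : set J) (P : J -> set X) (x : X) :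
  finite_set F -> (forall j, F j -> nbhs x (P j)) ->
  nbhs x [set z | forall j, F j -> P j z].
Proof.
move=> finF hP.
have finS : finite_set [set P j | j in F] by exact: finite_image.
have H : forall A : set X, A \in fset_set [set P j | j in F] <-> [set P j | j in F] A.
  by move=> A; rewrite in_fset_set // in_setE.
have HB : nbhs x (\bigcap_(i in [set` fset_set [set P j | j in F]]) id i).
  apply: filter_bigI => A /H [j Fj <-]; exact: hP.
apply: filterS HB => z Hz j Fj; apply: (Hz (P j)) => /=.
by apply/H; exists j.
Qed.
Lemma onbhs {X : topologicalType} {A : set X} {x} : open A -> A x -> nbhs x A.
Proof. by move=> oA Ax; apply: open_nbhs_nbhs; split. Qed.

Lemma core (X : topologicalType) (I : Type) (U : I -> set X) (P M : set X)
  (J : Type) (G : J -> set X) :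
  (forall i, open (U i)) -> open P -> M `<=` P -> (forall j, open (G j)) ->
  M `<=` \bigcup_j G j ->
  (forall j, exists i, closure (G j) `&` P `<=` U i) ->
  (forall x, M x -> exists N, nbhs x N /\ finite_set [set j | G j `&` N !=set0]) ->
  exists (J' : Type) (W : J' -> set X),
    (forall j, open (W j)) /\ M `<=` \bigcup_j W j /\ star_property U W.
Proof.
move=> oU oP MP oG MG hcl hfin.
case: (choice hcl) => sg Hsg.
pose good (t : X * set X * J) := [/\ M t.1.1, nbhs t.1.1 t.1.2,
  finite_set [set j | G j `&` t.1.2 !=set0] & G t.2 t.1.1].
pose A (t : X * set X * J) := t.1.2 `&` P `&` G t.2 `&`
  [set z | forall j, G j `&` t.1.2 !=set0 ->
     (closure (G j) t.1.1 -> U (sg j) z) /\ (~ closure (G j) t.1.1 -> ~ closure (G j) z)].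
exists {t | good t}, (fun s => interior (A (proj1_sig s))).
split; first by move=> s; exact: open_interior.
split.
  move=> x Mx.
  have [N [Nx finN]] := hfin x Mx.
  have [j0 _ Gx] := MG x Mx.
  have gt : good (x, N, j0) by split.
  exists (exist _ (x, N, j0) gt) => //=.
  rewrite /interior /A /=.
  apply: filterI; last first.
    apply: (@fin_nbhs X J _ (fun j z => (closure (G j) x -> U (sg j) z) /\ (~ closure (G j) x -> ~ closure (G j) z)) x finN) => j _.
    case: (pselect (closure (G j) x)) => cx.
      have ux : U (sg j) x by apply: Hsg; split => //; exact: MP.
      by apply: (filterS _ (onbhs (oU (sg j)) ux)) => z Uz; split.
    have ocx : open (~` closure (G j)) by rewrite openC; exact: closed_closure.
    by apply: (filterS _ (onbhs ocx cx)) => z nz; split.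
  apply: filterI; last exact: onbhs.
  apply: filterI => //; exact: onbhs (MP _ Mx).
move=> [[[x N] j0] [/= Mx Nx finN Gx]] [[[y N'] j1] [/= My Ny finN' Gy]] /=.
move=> [z [/interior_subset Az1 /interior_subset Az2]].
exists (sg j0).
have hx : G j0 `&` N !=set0 by exists x; split => //; exact: nbhs_singleton.
have Gz : G j0 z by case: Az1 => -[[_ _ ?] _].
have hy : G j0 `&` N' !=set0 by exists z; split => //; case: Az2 => -[[? _] _] _.
have cy : closure (G j0) y.
  apply: contrapT => ncy.
  case: Az2 => _ /(_ j0 hy) [_ /(_ ncy)]; apply; exact: subset_closure.
move=> w [/interior_subset [_ /(_ j0 hx) [H _]]|/interior_subset [_ /(_ j0 hy) [H _]]].
  by apply: H; exact: subset_closure.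
exact: H.
Qed.
Lemma preg (X : topologicalType) (P : set X) : hausdorff_space X -> open P ->
  paracompact_subset P ->
  forall x (V : set X), P x -> open V -> V x ->
  exists O, [/\ open O, O x, O `<=` P & closure O `&` P `<=` V].
Proof.
move=> hX oP hpara x V Px oV Vx.
move: hX; rewrite open_hausdorff => hX.
pose K := {ab : set X * set X | [/\ open ab.1, open ab.2, ab.1 `&` ab.2 = set0 & ab.2 x]}.
pose f (o : option K) := match o with None => V | Some k => (proj1_sig k).1 end.
have of_ : forall o, open (f o) by case=> [[ab [? ? ? ?]]|].
have cf : P `<=` \bigcup_o f o.
  move=> y Py; case: (pselect (V y)) => Vy; first by exists None.
  have yx : y != x by apply/eqP => yx; apply: Vy; rewrite yx.
  have [[A B] /= [yA xB] [oA oB /eqP AB]] := hX y x yx.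
  have kP : [/\ open (A, B).1, open (A, B).2, (A, B).1 `&` (A, B).2 = set0 & (A, B).2 x].
    by split => //=; rewrite -in_setE.
  exists (Some (exist _ (A, B) kP)) => //=; by rewrite -in_setE.
have [J [W [oW covW refW locW]]] := hpara (option K) f of_ cf.
have [N [Nx finN]] := locW x Px.
pose T := [set j | W j `&` P `&` N !=set0 /\ ~ (W j `&` P `<=` V)].
exists (interior (N `&` P `&` [set z | forall j, T j -> ~ closure (W j `&` P) z])).
split.
- exact: open_interior.
- rewrite /interior; apply: filterI; first by apply: filterI => //; exact: onbhs.
  have finT : finite_set T by apply: sub_finite_set finN => j [].
  apply: (@fin_nbhs X J _ (fun j => ~` closure (W j `&` P)) x finT) => j [_ nWV].
  have oc : open (~` closure (W j `&` P)) by rewrite openC; exact: closed_closure.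
  apply: onbhs oc _ => cx.
  have [[[[A B] [oA oB AB xB]]|] /= Hsub] := refW j; last exact: nWV.
  have [z [[Wz Pz] Bz]] := cx B (onbhs oB xB).
  have : (A `&` B) z by split => //; apply: Hsub.
  by rewrite AB.
- by move=> z /interior_subset [[]].
- move=> y [cy Py]; apply: contrapT => nVy.
  have [j _ Wy] := covW y Py.
  have [z [Oz Wz]] := cy (W j) (onbhs (oW j) Wy).
  have [[Nz Pz] Hz] := interior_subset Oz.
  apply: (Hz j); last by apply: subset_closure.
  split; first by exists z.
  by move=> /(_ y (conj Wy Py)).
Qed.
Lemma core2 (X : topologicalType) (I : Type) (U : I -> set X) (P M : set X)
  (J : Type) (G : J -> set X) :
  (forall i, open (U i)) -> open P -> M `<=` P -> (forall j, open (G j)) ->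
  M `<=` \bigcup_j G j ->
  (forall j, G j !=set0 -> exists i, closure (G j) `&` P `<=` U i) ->
  (forall x, M x -> exists N, nbhs x N /\ finite_set [set j | G j `&` N !=set0]) ->
  exists (J' : Type) (W : J' -> set X),
    (forall j, open (W j)) /\ M `<=` \bigcup_j W j /\ star_property U W.
Proof.
move=> oU oP MP oG MG hcl hfin.
case: (pselect (exists i : I, True)) => [[i0 _]|noI].
  apply: (@core X I U P M J G oU oP MP oG MG _ hfin) => j.
  case: (pselect (G j !=set0)) => [/hcl //|G0]; exists i0.
  have -> : G j = set0 by apply/seteqP; split => // z Gz; apply: G0; exists z.
  by rewrite closure0 => y [].
exists False, (fun _ => set0); split => //; split.
  move=> x Mx; exfalso; have [j _ Gx] := MG x Mx.
  have [i _] := hcl j (ex_intro _ x Gx); by apply: noI; exists i.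
by [].
Qed.

Lemma mainP (X : topologicalType) (I : Type) (U : I -> set X) (P M : set X) :
  hausdorff_space X -> (forall i, open (U i)) -> open P -> paracompact_subset P ->
  M `<=` P -> P `&` closure M `<=` M -> M `<=` \bigcup_i U i ->
  exists (J : Type) (W : J -> set X),
    (forall j, open (W j)) /\ M `<=` \bigcup_j W j /\ star_property U W.
Proof.
move=> hX oU oP hpara MP PcM MU.
pose K := {t : X * I * set X | [/\ M t.1.1, open t.2, t.2 t.1.1, t.2 `<=` P
   & closure t.2 `&` P `<=` U t.1.2]}.
pose f (o : option K) := match o with
  None => P `&` ~` closure M | Some k => (proj1_sig k).2 end.
have of_ : forall o, open (f o).
  case=> [[t [? ? ? ? ?]]|] //=; apply: openI => //.
  by rewrite openC; exact: closed_closure.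
have cf : P `<=` \bigcup_o f o.
  move=> y Py; case: (pselect (M y)) => My; last first.
    by exists None => //; split => // cy; apply: My; apply: PcM.
  have [i _ Uy] := MU y My.
  have [Ob [oO Oy OP cO]] := @preg X P hX oP hpara y (U i) Py (oU i) Uy.
  have kP : [/\ M (y, i, Ob).1.1, open (y, i, Ob).2, (y, i, Ob).2 (y, i, Ob).1.1,
     (y, i, Ob).2 `<=` P & closure (y, i, Ob).2 `&` P `<=` U (y, i, Ob).1.2] by [].
  by exists (Some (exist _ (y, i, Ob) kP)).
have [J [V [oV covV refV locV]]] := hpara (option K) f of_ cf.
case: (choice refV) => o Ho.
pose G j := match o j with None => set0 | Some k => V j `&` (proj1_sig k).2 end.
have GVP : forall j, G j `&` P `<=` V j `&` P.
  by move=> j; rewrite /G; case: (o j) => [[t [? ? ? ? ?]]|] z [] //= [].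
apply: (@core2 X I U P M J G oU oP MP).
- move=> j; rewrite /G; case: (o j) => [[t [? ? ? ? ?]]|] /=; last exact: open0.
  exact: openI.
- move=> x Mx; have [j _ Vx] := covV x (MP x Mx).
  exists j => //; rewrite /G.
  have := Ho j; case: (o j) => [[t [? ? ? ? ?]]|] /= H.
    by split => //; apply: H; split => //; exact: MP.
  have [_ ] := H x (conj Vx (MP x Mx)); apply; exact: subset_closure.
- move=> j; rewrite /G; case: (o j) => [[t [? ? ? ? cl]]|] /= Gne; last by case: Gne => z.
  exists t.1.2 => z [cz Pz]; apply: cl; split => //.
  by apply: closureS cz => w [].
- move=> x Mx; have [N [Nx finN]] := locV x (MP x Mx).
  exists N; split => //; apply: sub_finite_set finN => j [z [Gz Nz]].
  exists z; split => //; rewrite /G in Gz *.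
  move: Gz; case: (o j) => [[t [? ? ? tP ?]]|] //= [Vz tz].
  by split => //; apply: tP.
Qed.
Lemma cc (X : topologicalType) (M : set X) (m : X) : compact M -> cover_compact M.
Proof.
move=> cM.
pose Xp : ptopologicalType := HB.pack X (isPointed.Build X m).
have := @compact_cover Xp.
move=> /(congr1 (fun f => f M)) H.
exact: (eq_ind _ id cM _ H).
Qed.
Lemma partA (X : topologicalType) (I : Type) (U : I -> set X) :
  (forall i, open (U i)) -> regular_space X -> forall M : set X, compact M ->
  M `<=` \bigcup_i U i ->
  exists (J : Type) (W : J -> set X),
    (forall j, open (W j)) /\ M `<=` \bigcup_j W j /\ star_property U W.
Proof.
move=> oU hreg M cM MU.
pose D := [set O : set X | open O /\ exists i, closure O `<=` U i].
case: (pselect (exists m, M m)) => [[m _]|noM]; last first.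
  exists False, (fun _ => set0); split => //; split => // x Mx.
  by exfalso; apply: noM; exists x.
have {}cM : cover_compact M by exact: cc m cM.
have Mcov : M `<=` cover D id.
  move=> x Mx; have [i _ Ux] := MU x Mx.
  have [B nB clB] := hreg x (U i) (onbhs (oU i) Ux).
  exists (interior B) => //; split; first exact: open_interior.
  exists i; apply: subset_trans clB; apply: closureS; exact: interior_subset.
have [D' sD' MD'] := cM (set X) D id (fun O DO => proj1 DO) Mcov.
apply: (@core X I U setT M D' (fun j => fsval j) oU openT (fun _ _ => Logic.I)).
- by move=> j; have := sD' _ (fsvalP j); rewrite in_setE => -[].
- move=> x /MD' [Ob Oin Ox]; exists (FSetSub Oin) => //.
- move=> j; have := sD' _ (fsvalP j); rewrite in_setE => -[_ [i cl]]; exists i => z [cz _]; exact: cl.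
- move=> x _; exists setT; split; first exact: filterT.
  exact: finite_finset.
Qed.
Theorem lemma2p1 (X : topologicalType) (I : Type) (U : I -> set X) :
  hausdorff_space X -> (forall i, open (U i)) ->
  (* (a) *)
  (regular_space X -> forall M : set X, compact M -> M `<=` \bigcup_i U i ->
     exists (J : Type) (W : J -> set X),
       (forall j, open (W j)) /\ M `<=` \bigcup_j W j /\ star_property U W) /\
  (* (b) *)
  (paracompact_space X -> [set: X] `<=` \bigcup_i U i ->
     exists (J : Type) (W : J -> set X),
       (forall j, open (W j)) /\ [set: X] `<=` \bigcup_j W j /\ star_property U W) /\
  (* (c) *)
  (paracompact_space X -> forall M : set X, closed M -> M `<=` \bigcup_i U i ->
     exists (J : Type) (W : J -> set X),
       (forall j, open (W j)) /\ M `<=` \bigcup_j W j /\ star_property U W) /\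
  (* (d) *)
  (forall M : set X, locally_closed M ->
     (forall V : set X, open V -> M `<=` V ->
        exists P : set X, [/\ open P, M `<=` P, P `<=` V & paracompact_subset P]) ->
     M `<=` \bigcup_i U i ->
     exists (J : Type) (W : J -> set X),
       (forall j, open (W j)) /\ M `<=` \bigcup_j W j /\ star_property U W).
Proof.
move=> hX oU; split; first exact: partA.
split.
  move=> hp MU; apply: (@mainP X I U setT setT hX oU openT hp) => //.
split.
  move=> hp M cM MU; apply: (@mainP X I U setT M hX oU openT hp) => //.
  by move=> y [_ cy]; rewrite [X in X y](proj1 (closure_id M) cM).
move=> M lcM hP MU.
pose V := [set y | exists Uc C, [/\ closed C, Uc `&` M = Uc `&` C & interior Uc y]].
have oV : open V.
  rewrite openE => y [Uc [C [cC e iy]]].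
  rewrite /interior; apply: filterS (nbhs_interior iy) => z iz.
  by exists Uc, C; split.
have MV : M `<=` V.
  move=> x Mx; have [Uc [nU [C [cC e]]]] := lcM x Mx.
  by exists Uc, C; split.
have [P [oP MP PV pP]] := hP V oV MV.
apply: (@mainP X I U P M hX oU oP pP MP _ MU).
move=> y [Py cy]; have [Uc [C [cC e iy]]] := PV y Py.
have Cy : C y.
  rewrite [X in X y](proj1 (closure_id C) cC) => B nB.
  have [z [Mz [iz Bz]]] := cy (interior Uc `&` B) (filterI (nbhs_interior iy) nB).
  have : (Uc `&` C) z by rewrite -e; split => //; exact: interior_subset.
  by case=> _ Cz; exists z.
have : (Uc `&` M) y by rewrite e; split => //; exact: interior_subset.
by case.
Qed.
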